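(* An R$^*$-algebra $A$ is purely atomic if and only if there is no strictly decreasing infinite sequence $p_1> p_2>\cdots$ of projections in $A$ (equivalently, no infinite strictly descending chain of principal right ideals of $A$).
   Context: An R$^*$-algebra is a (not necessarily closed, not necessarily unital) $^*$-subalgebra $A$ of $B(H)$, $H$ a complex Hilbert space, such that every self-adjoint element of $A$ has finite spectrum. Projections are $p=p^2=p^*$, ordered by $p\le q$ iff $pq=p$. An atom is a minimal nonzero projection in $A$; $A$ is purely atomic if every projection of $A$ is a sum of finitely many atoms. *)

(* Defs.v *)
From HB Require Import structures.
From mathcomp Require Import all_boot all_order all_algebra.
From mathcomp Require Import complex.
From mathcomp Require Import reals.
Set Implicit Arguments. Unset Strict Implicit. Unset Printing Implicit Defensive.
Import Order.TTheory GRing.Theory Num.Theory.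
Local Open Scope ring_scope.

Definition is_inner_product (R : realType) (V : lmodType R[i])
    (ip : V -> V -> R[i]) : Prop :=
  [/\ (forall (a : R[i]) (x y z : V), ip (a *: x + y) z = a * ip x z + ip y z),
      (forall x y : V, ip y x = (ip x y)^*),
      (forall x : V, 0 <= ip x x) &
      (forall x : V, ip x x = 0 -> x = 0)].

Definition normv (R : realType) (V : lmodType R[i]) (ip : V -> V -> R[i])
    (x : V) : R := Num.sqrt (complex.Re (ip x x)).

Definition is_complete (R : realType) (V : lmodType R[i])
    (ip : V -> V -> R[i]) : Prop :=
  forall u : nat -> V,
    (forall e : R, 0 < e -> exists N : nat, forall m n : nat,
        (N <= m)%N -> (N <= n)%N -> normv ip (u m - u n) < e) ->
    exists l : V, forall e : R, 0 < e -> exists N : nat, forall n : nat,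
        (N <= n)%N -> normv ip (u n - l) < e.

Definition is_hilbert (R : realType) (V : lmodType R[i])
    (ip : V -> V -> R[i]) : Prop :=
  is_inner_product ip /\ is_complete ip.

Definition is_linear_op (R : realType) (V : lmodType R[i]) (T : V -> V) : Prop :=
  forall (a : R[i]) (x y : V), T (a *: x + y) = a *: T x + T y.

Definition is_bounded_op (R : realType) (V : lmodType R[i])
    (ip : V -> V -> R[i]) (T : V -> V) : Prop :=
  is_linear_op T /\ exists M : R, forall x : V, normv ip (T x) <= M * normv ip x.

Definition is_adjoint (R : realType) (V : lmodType R[i])
    (ip : V -> V -> R[i]) (T S : V -> V) : Prop :=
  forall x y : V, ip (T x) y = ip x (S y).

Definition in_spectrum (R : realType) (V : lmodType R[i])
    (ip : V -> V -> R[i]) (T : V -> V) (lam : R[i]) : Prop :=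
  ~ exists S : V -> V, is_bounded_op ip S /\
      (forall x : V, S (T x - lam *: x) = x) /\
      (forall x : V, T (S x) - lam *: S x = x).

(* A : (V -> V) -> Prop is a (not necessarily closed, not necessarily unital)
   *-subalgebra of B(H) all of whose self-adjoint elements have finite
   spectrum. *)
Definition is_Rstar_algebra (R : realType) (V : lmodType R[i])
    (ip : V -> V -> R[i]) (A : (V -> V) -> Prop) : Prop :=
  (forall T, A T -> is_bounded_op ip T) /\
  A (fun _ => 0) /\
  (forall T S, A T -> A S -> A (fun x => T x + S x)) /\
  (forall (a : R[i]) T, A T -> A (fun x => a *: T x)) /\
  (forall T S, A T -> A S -> A (fun x => T (S x))) /\
  (forall T, A T -> exists S, A S /\ is_adjoint ip T S) /\
  (forall T, A T -> is_adjoint ip T T ->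
     exists s : seq R[i], forall lam, in_spectrum ip T lam -> lam \in s).

Definition is_proj (R : realType) (V : lmodType R[i])
    (ip : V -> V -> R[i]) (A : (V -> V) -> Prop) (p : V -> V) : Prop :=
  [/\ A p, (forall x, p (p x) = p x) & is_adjoint ip p p].

Definition proj_le (R : realType) (V : lmodType R[i]) (p q : V -> V) : Prop :=
  forall x, p (q x) = p x.

Definition proj_lt (R : realType) (V : lmodType R[i]) (p q : V -> V) : Prop :=
  proj_le p q /\ p <> q.

Definition is_atom (R : realType) (V : lmodType R[i])
    (ip : V -> V -> R[i]) (A : (V -> V) -> Prop) (p : V -> V) : Prop :=
  [/\ is_proj ip A p, p <> (fun _ => 0) &
      forall q, is_proj ip A q -> q <> (fun _ => 0) -> proj_le q p -> q = p].

Definition purely_atomic (R : realType) (V : lmodType R[i])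
    (ip : V -> V -> R[i]) (A : (V -> V) -> Prop) : Prop :=
  forall p, is_proj ip A p ->
    exists s : seq (V -> V),
      (forall i : nat, (i < size s)%N -> is_atom ip A (nth (fun _ => 0) s i)) /\
      p = (fun x => \sum_(q <- s) q x).

(* The principal right ideal of A generated by a in A (A need not be unital):
   aA + C a = { a x + lam a | x in A, lam in C }. *)
Definition principal_right_ideal (R : realType) (V : lmodType R[i])
    (A : (V -> V) -> Prop) (a : V -> V) : (V -> V) -> Prop :=
  fun T => exists (x : V -> V) (lam : R[i]),
      A x /\ T = (fun v => a (x v) + lam *: a v).

(* Main.v *)
Require Import Defs.
From HB Require Import structures.
From mathcomp Require Import all_boot all_order all_algebra.
From mathcomp Require Import complex.
From mathcomp Require Import reals.
From mathcomp Require Import boolp classical_sets.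
From mathcomp Require Import ring lra zify.
Import Order.TTheory GRing.Theory Num.Theory.
Local Open Scope ring_scope.
Set Implicit Arguments. Unset Strict Implicit. Unset Printing Implicit Defensive.
Section Basics.
Variable R : realType.
Variable V : lmodType R[i].
Variable ip : V -> V -> R[i].
Hypothesis Hip : is_inner_product ip.

Lemma ipl a x y z : ip (a *: x + y) z = a * ip x z + ip y z.
Proof. by case: Hip. Qed.
Lemma ipC x y : ip y x = (ip x y)^*.
Proof. by case: Hip. Qed.
Lemma ipge0 x : 0 <= ip x x.
Proof. by case: Hip. Qed.
Lemma ipdef x : ip x x = 0 -> x = 0.
Proof. by case: Hip => _ _ _; apply. Qed.

Lemma ip0l z : ip 0 z = 0.
Proof.
have := ipl 1 0 0 z; rewrite scaler0 addr0 mul1r => h.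
by apply: (@addrI _ (ip 0 z)); rewrite addr0 -h.
Qed.
Lemma ipDl x y z : ip (x + y) z = ip x z + ip y z.
Proof. by have := ipl 1 x y z; rewrite scale1r mul1r. Qed.
Lemma ipZl a x z : ip (a *: x) z = a * ip x z.
Proof. by have := ipl a x 0 z; rewrite !addr0 ip0l addr0. Qed.
Lemma ipNl x z : ip (- x) z = - ip x z.
Proof. by rewrite -scaleN1r ipZl mulN1r. Qed.
Lemma ipBl x y z : ip (x - y) z = ip x z - ip y z.
Proof. by rewrite ipDl ipNl. Qed.
Lemma ip0r z : ip z 0 = 0.
Proof. by rewrite ipC ip0l conjC0. Qed.
Lemma ipDr x y z : ip z (x + y) = ip z x + ip z y.
Proof. by rewrite ipC ipDl (ipC x z) (ipC y z) rmorphD. Qed.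
Lemma ipZr a x z : ip z (a *: x) = a^* * ip z x.
Proof. by rewrite ipC ipZl (ipC x z) rmorphM. Qed.
Lemma ipNr x z : ip z (- x) = - ip z x.
Proof. by rewrite -scaleN1r ipZr rmorphN1 mulN1r. Qed.
Lemma ipBr x y z : ip z (x - y) = ip z x - ip z y.
Proof. by rewrite ipDr ipNr. Qed.
Lemma ip_suml (I : Type) (r : seq I) (P : pred I) (F : I -> V) z :
  ip (\sum_(i <- r | P i) F i) z = \sum_(i <- r | P i) ip (F i) z.
Proof. exact: (big_morph (fun x => ip x z) (fun x y => ipDl x y z) (ip0l z)). Qed.
Lemma ip_sumr (I : Type) (r : seq I) (P : pred I) (F : I -> V) z :
  ip z (\sum_(i <- r | P i) F i) = \sum_(i <- r | P i) ip z (F i).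
Proof. exact: (big_morph (fun x => ip z x) (fun x y => ipDr x y z) (ip0r z)). Qed.

Definition N x := complex.Re (ip x x).

Lemma ge0_realC (z : R[i]) : 0 <= z -> z = (complex.Re z)%:C%C.
Proof. by case: z => a b; rewrite lecE /= => /andP [/eqP -> _]. Qed.

Lemma ipxx x : ip x x = (N x)%:C%C.
Proof. exact: ge0_realC (ipge0 x). Qed.
Lemma N_ge0 x : 0 <= N x.
Proof. by have := ipge0 x; rewrite ipxx ler0c. Qed.
Lemma N_eq0 x : N x = 0 -> x = 0.
Proof. by move=> h; apply: ipdef; rewrite ipxx h. Qed.
Lemma N0 : N 0 = 0.
Proof. by rewrite /N ip0l. Qed.

Lemma ip_inj a b : (forall w, ip a w = ip b w) -> a = b.
Proof.
move=> h; apply/eqP; rewrite -subr_eq0; apply/eqP/ipdef.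
by rewrite ipBl h subrr.
Qed.

Section Lin.
Variable T : V -> V.
Hypothesis HT : is_linear_op T.
Lemma lin0 : T 0 = 0.
Proof.
have := HT 1 0 0; rewrite scaler0 addr0 scale1r => h.
by apply: (@addrI _ (T 0)); rewrite addr0 -h.
Qed.
Lemma linD x y : T (x + y) = T x + T y.
Proof. by have := HT 1 x y; rewrite !scale1r. Qed.
Lemma linZ a x : T (a *: x) = a *: T x.
Proof. by have := HT a x 0; rewrite !addr0 lin0 addr0. Qed.
Lemma linN x : T (- x) = - T x.
Proof. by rewrite -scaleN1r linZ scaleN1r. Qed.
Lemma linB x y : T (x - y) = T x - T y.
Proof. by rewrite linD linN. Qed.
Lemma lin_sum (I : Type) (r : seq I) (P : pred I) (F : I -> V) :
  T (\sum_(i <- r | P i) F i) = \sum_(i <- r | P i) T (F i).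
Proof. exact: (big_morph T linD lin0). Qed.
Lemma iter_lin n : is_linear_op (iter n T).
Proof.
elim: n => [|n IH] a x y //=.
by rewrite IH linD linZ.
Qed.
End Lin.

Lemma adj_le (p q : V -> V) : is_adjoint ip p p -> is_adjoint ip q q ->
  (forall v, p (q v) = q v) -> forall v, q (p v) = q v.
Proof.
move=> hp hq h v; apply: ip_inj => w.
by rewrite hq hp h -hq.
Qed.

Lemma selfadj_real (T : V -> V) x : is_adjoint ip T T ->
  ip (T x) x = (complex.Re (ip (T x) x))%:C%C.
Proof.
move=> h; have e : (ip (T x) x)^* = ip (T x) x by rewrite -ipC h.
case: (ip (T x) x) e => a b /= [] hb.
by congr (Complex _ _); lra.
Qed.

End Basics.
Section Ev.
Variable R : realType.
Variable V : lmodType R[i].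
Variable T : V -> V.
Hypothesis HT : is_linear_op T.

Definition ev (p : {poly R[i]}) (v : V) : V :=
  \sum_(i < size p) p`_i *: iter i T v.

Lemma ev_widen n (p : {poly R[i]}) v : (size p <= n)%N ->
  ev p v = \sum_(i < n) p`_i *: iter i T v.
Proof.
move=> h; rewrite /ev (big_ord_widen n (fun i => p`_i *: iter i T v) h).
rewrite big_mkcond; apply: eq_bigr => i _; case: ifP => // /negbT.
by rewrite -leqNgt => hi; rewrite nth_default // scale0r.
Qed.

Lemma ev0 v : ev 0 v = 0.
Proof. by rewrite /ev size_poly0 big_ord0. Qed.

Lemma evD p q v : ev (p + q) v = ev p v + ev q v.
Proof.
set n := maxn (size p) (size q).
rewrite !(@ev_widen n) ?leq_maxl ?leq_maxr ?size_polyD // -big_split /=.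
by apply: eq_bigr => i _; rewrite coefD scalerDl.
Qed.

Lemma evZ c p v : ev (c *: p) v = c *: ev p v.
Proof.
rewrite !(@ev_widen (size p)) ?size_scale_leq // scaler_sumr.
by apply: eq_bigr => i _; rewrite coefZ scalerA.
Qed.

Lemma evN p v : ev (- p) v = - ev p v.
Proof. by rewrite -(scaleN1r p) evZ scaleN1r. Qed.

Lemma evB p q v : ev (p - q) v = ev p v - ev q v.
Proof. by rewrite evD evN. Qed.

Lemma evC c v : ev c%:P v = c *: v.
Proof.
by rewrite (@ev_widen 1) ?size_polyC_leq1 // big_ord1 coefC.
Qed.

Lemma ev1 v : ev 1 v = v.
Proof. by rewrite -polyC1 evC scale1r. Qed.

Lemma evXM p v : ev ('X * p) v = T (ev p v).
Proof.
have hs : (size ('X * p)%R <= (size p).+1)%N.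
  by apply: leq_trans (size_polyMleq 'X p) _; rewrite size_polyX.
rewrite (@ev_widen _ _ _ hs) big_ord_recl coefXM /= scale0r add0r.
rewrite /ev (lin_sum HT); apply: eq_bigr => i _.
by rewrite coefXM /= (linZ HT).
Qed.

Lemma evX v : ev 'X v = T v.
Proof. by rewrite -[X in ev X]mulr1 evXM ev1. Qed.

Lemma ev_lin p : is_linear_op (ev p).
Proof.
move=> a x y; rewrite /ev scaler_sumr -big_split /=; apply: eq_bigr => i _.
by rewrite (iter_lin HT) scalerDr !scalerA mulrC.
Qed.

Lemma evM p q v : ev (p * q) v = ev p (ev q v).
Proof.
elim/poly_ind: p v => [|p c IH] v; first by rewrite mul0r !ev0.
have -> : (p * 'X + c%:P) * q = 'X * (p * q) + c *: q.
  by rewrite -mul_polyC; ring.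
by rewrite evD evXM evZ IH evD mulrC evXM evC.
Qed.

Lemma iter_eig a w n : T w = a *: w -> iter n T w = a ^+ n *: w.
Proof.
move=> h; elim: n => [|n IH] /=; first by rewrite expr0 scale1r.
by rewrite IH (linZ HT) h scalerA exprS mulrC.
Qed.

Lemma ev_eig a w p : T w = a *: w -> ev p w = p.[a] *: w.
Proof.
move=> h; rewrite /ev horner_coef scaler_suml; apply: eq_bigr => i _.
by rewrite (iter_eig _ h) scalerA.
Qed.

End Ev.
Section Spec.
Variable R : realType.
Variable V : lmodType R[i].
Variable ip : V -> V -> R[i].
Hypothesis Hip : is_inner_product ip.

Local Notation N := (N ip).

Definition BB (S : V -> V) := exists c : R, 0 < c /\ forall x, c * N x <= N (S x).

Lemma BB_ext S S' : (forall v, S v = S' v) -> BB S -> BB S'.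
Proof. by move=> h [c [c0 hc]]; exists c; split=> // x; rewrite -h. Qed.

Lemma BB_comp S1 S2 : BB S1 -> BB S2 -> BB (fun v => S1 (S2 v)).
Proof.
move=> [c1 [c10 h1]] [c2 [c20 h2]]; exists (c1 * c2); split; first exact: mulr_gt0.
move=> x; apply: le_trans (h1 _); rewrite -mulrA; apply: ler_wpM2l; first exact: ltW.
exact: h2.
Qed.

Lemma ipBB u w x : ip (u - w *: x) (u - w *: x) =
  ip u u - w^* * ip u x - w * ip x u + w * w^* * ip x x.
Proof.
rewrite (ipBl Hip) !(ipBr Hip) !(ipZl Hip) !(ipZr Hip); ring.
Qed.

Lemma ReM_real (a b : R) : complex.Re ((a%:C)%C * (b%:C)%C) = a * b.
Proof. by rewrite /= !mulr0 subr0. Qed.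

Lemma N_shift T x z : is_adjoint ip T T ->
  N (T x - z *: x) = N (T x) - 2 * complex.Re z * complex.Re (ip (T x) x)
     + (complex.Re z ^+ 2 + complex.Im z ^+ 2) * N x.
Proof.
move=> hT; rewrite /N ipBB.
have e1 : ip x (T x) = ip (T x) x by rewrite hT.
rewrite e1 (selfadj_real Hip x hT) (ipxx Hip x) (ipxx Hip (T x)).
case: z => a b /=.
set r := complex.Re (ip (T x) x); set nx := complex.Re (ip x x).
set nt := complex.Re (ip (T x) (T x)).
rewrite /=; ring.
Qed.

Lemma real_of_notBB T z : is_linear_op T -> is_adjoint ip T T ->
  ~ BB (fun v => T v - z *: v) -> complex.Im z = 0.
Proof.
move=> hl hT nb; apply: contrapT => hz; apply: nb.
exists (complex.Im z ^+ 2); split.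
  by rewrite lt_def sqr_ge0 andbT sqrf_eq0; apply/eqP.
move=> x; rewrite (N_shift x z hT).
have := N_ge0 Hip (T x - (complex.Re z)%:C%C *: x).
rewrite (N_shift x _ hT) /= expr0n /= addr0.
move=> h; lra.
Qed.

Lemma N_scaleR (t : R) w : N ((t%:C)%C *: w) = t ^+ 2 * N w.
Proof.
rewrite /N (ipZl Hip) (ipZr Hip) (ipxx Hip w).
have -> : ((t%:C)%C)^* = (t%:C)%C by apply/eqP; rewrite -CrealE; apply/complex_realP; exists t.
rewrite /=; ring.
Qed.

Lemma normv_N x : normv ip x = Num.sqrt (N x).
Proof. by []. Qed.

Lemma bounded_N S K : (forall x, normv ip (S x) <= K * normv ip x) ->
  forall x, N (S x) <= K ^+ 2 * N x.
Proof.
move=> h x; have := h x; rewrite !normv_N => hx.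
have s1 := sqrtr_ge0 (N (S x)); have s2 := sqrtr_ge0 (N x).
have e1 := sqr_sqrtr (N_ge0 Hip (S x)); have e2 := sqr_sqrtr (N_ge0 Hip x).
rewrite -e1 -e2; nra.
Qed.

Lemma notBB_spec T z : ~ BB (fun v => T v - z *: v) -> in_spectrum ip T z.
Proof.
move=> nb [S [[Sl [K hK]] [h1 h2]]]; apply: nb.
exists ((K ^+ 2 + 1)^-1); split; first by rewrite invr_gt0; nra.
move=> x; have hx := bounded_N hK (T x - z *: x); rewrite h1 in hx.
have hn := N_ge0 Hip (T x - z *: x).
have hp : 0 < K ^+ 2 + 1 by nra.
rewrite ler_pdivrMl //; nra.
Qed.

End Spec.
Section LemC.
Variable R : realType.
Variable V : lmodType R[i].
Variable ip : V -> V -> R[i].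
Hypothesis Hip : is_inner_product ip.
Local Notation N := (N ip).
Local Notation BB := (BB ip).

Lemma lemC_arith (M c e a b d : R) : a <= M * b ->
  c * d <= a - 2 * M * b + M ^+ 2 * d ->
  b <= M * d -> e * (2 * M) <= c -> e * 2 <= M -> d <= 1 -> M - e < b ->
  0 <= d -> 0 < c -> 0 < M -> 0 < e -> False.
Proof. move=> h1 h2 h3 hec' hem' hx hr hN c0 M0 e0; nra. Qed.

Lemma lemC B K : is_linear_op B -> is_adjoint ip B B ->
  (forall x, normv ip (B x) <= K * normv ip x) -> (exists v, B v <> 0) ->
  exists M : R, 0 < M /\ ~ BB (fun x => B (B x) - ((M%:C)%C) *: x).
Proof.
move=> Bl Ba hK [v hv].
have hK2 := bounded_N Hip hK.
pose S : set R := fun r => exists x, N x <= 1 /\ r = N (B x).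
have hS : has_sup S.
  split; first by exists 0; exists 0; rewrite (N0 Hip) (lin0 Bl) (N0 Hip); split => //; lra.
  exists (K ^+ 2) => r [x [hx ->]]; apply: le_trans (hK2 x) _.
  have := sqr_ge0 K; nra.
pose M := sup S.
have hM : forall x, N (B x) <= M * N x.
  move=> x; have [/(N_eq0 Hip) -> | nx] := eqVneq (N x) 0.
    by rewrite (lin0 Bl) (N0 Hip) mulr0.
  have nx0 : 0 < N x by rewrite lt_def nx (N_ge0 Hip).
  pose t := (Num.sqrt (N x))^-1.
  have ht : t ^+ 2 * N x = 1 by rewrite exprVn sqr_sqrtr ?mulVf // ltW.
  have : S (N (B ((t%:C)%C *: x))).
    by exists ((t%:C)%C *: x); rewrite (N_scaleR Hip) ht; split.
  move/(sup_upper_bound hS); rewrite /= (linZ Bl) (N_scaleR Hip) => h.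
  have -> : N (B x) = N x * (t ^+ 2 * N (B x)).
    by rewrite mulrA [N x * _]mulrC ht mul1r.
  rewrite [M * _]mulrC; apply: ler_wpM2l => //; exact: ltW.
have Bv0 : 0 < N (B v).
  rewrite lt_def (N_ge0 Hip) andbT; apply/eqP => /(N_eq0 Hip); exact: hv.
have M0 : 0 < M by have := hM v; have := N_ge0 Hip v; nra.
exists M; split => //.
move=> [c [c0 hc]].
pose e := Num.min (M / 2) (c / (2 * M)).
have e0 : 0 < e.
  by rewrite lt_min; apply/andP; split; apply: divr_gt0 => //; nra.
have [r [x [hx ->]] hr] := sup_adherent e0 hS.
have BBa : is_adjoint ip (fun v => B (B v)) (fun v => B (B v)).
  by move=> y z; rewrite Ba Ba.
have hP : N (B (B x) - ((M%:C)%C) *: x) =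
    N (B (B x)) - 2 * M * N (B x) + M ^+ 2 * N x.
  rewrite (N_shift Hip x _ BBa) /= Ba -/(N (B x)).
  by rewrite expr0n /= addr0.
have h1 := hM (B x); have h2 := hc x; have h3 := hM x.
have hem : e <= M / 2 by rewrite ge_min lexx.
have hec : e <= c / (2 * M) by rewrite ge_min lexx orbT.
have hec' : e * (2 * M) <= c by rewrite -ler_pdivlMr //; nra.
have hem' : e * 2 <= M by rewrite -ler_pdivlMr.
rewrite hP in h2.
have hN := N_ge0 Hip x.
rewrite -/M in hr.
exact: (lemC_arith h1 h2 h3 hec' hem' hx hr hN c0 M0 e0).
Qed.

End LemC.
Definition rpoly (R : realType) (p : {poly R[i]}) := map_poly Num.conj p = p.
Lemma rpolyM (R : realType) (p q : {poly R[i]}) : rpoly p -> rpoly q -> rpoly (p * q).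
Proof. rewrite /rpoly => hp hq. by rewrite rmorphM /= hp hq. Qed.
Lemma rpoly_coef (R : realType) (p : {poly R[i]}) i : rpoly p -> (p`_i)^* = p`_i.
Proof. rewrite /rpoly => h. by rewrite -{2}h coef_map. Qed.
Lemma rpoly_prod (R : realType) (l : seq R[i]) : (forall a, a \in l -> a^* = a) -> rpoly (\prod_(a <- l) ('X - a%:P)).
Proof. move=> h. rewrite /rpoly rmorph_prod /=. apply: eq_big_seq => a ha. by rewrite rmorphB /= map_polyX map_polyC /= h. Qed.
Lemma rpoly_horner (R : realType) (p : {poly R[i]}) a : rpoly p -> a^* = a -> (p.[a])^* = p.[a].
Proof. by move=> hp ha; rewrite -horner_map /= hp ha. Qed.

Section KL.
Variable R : realType.
Variable V : lmodType R[i].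
Variable ip : V -> V -> R[i].
Hypothesis Hip : is_inner_product ip.
Local Notation N := (N ip).
Local Notation BB := (BB ip).

Lemma iter_adj T n : is_adjoint ip T T -> is_adjoint ip (iter n T) (iter n T).
Proof.
move=> hT; elim: n => [|n IH] x y //=.
by rewrite hT IH -iterSr.
Qed.

Lemma ev_adj T p : is_adjoint ip T T -> rpoly p ->
  is_adjoint ip (ev T p) (ev T p).
Proof.
move=> hT hp x y; rewrite /ev (ip_suml Hip) (ip_sumr Hip).
apply: eq_bigr => i _; rewrite (ipZl Hip) (ipZr Hip) (iter_adj _ hT).
by rewrite rpoly_coef.
Qed.

Definition Lseq (s : seq R[i]) : seq R[i] :=
  0 :: [seq (complex.Re a)%:C%C | a <- s].
Definition Lq (s : seq R[i]) : {poly R[i]} :=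
  \prod_(a <- Lseq s) ('X - a%:P).

Lemma Lseq_real s a : a \in Lseq s -> a^* = a.
Proof.
rewrite in_cons => /orP [/eqP -> | /mapP [b _ ->]]; first exact: conjC0.
by apply/eqP; rewrite -CrealE; apply/complex_realP; exists (complex.Re b).
Qed.

Lemma Lq_real s : rpoly (Lq s).
Proof. exact/rpoly_prod/Lseq_real. Qed.

Lemma Lq_coef0 s : (Lq s)`_0 = 0.
Proof. by rewrite /Lq /Lseq big_cons subr0 coefXM. Qed.

Lemma BB_prod T rs : is_linear_op T ->
  (forall z, z \in rs -> BB (fun v => T v - z *: v)) ->
  BB (ev T (\prod_(z <- rs) ('X - z%:P))).
Proof.
move=> Tl; elim: rs => [|z rs IH] h.
  rewrite big_nil; exists 1; split => // x; rewrite ev1 mul1r //.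
rewrite big_cons.
apply: (BB_ext (S := fun v => (fun w => T w - z *: w)
     (ev T (\prod_(z <- rs) ('X - z%:P)) v))).
  by move=> x; rewrite evM // evB // evX // evC.
apply: (BB_comp (S1 := fun w => T w - z *: w)
   (S2 := ev T (\prod_(z <- rs) ('X - z%:P)))); first by apply: h; rewrite mem_head.
by apply: IH => z' hz'; apply: h; rewrite in_cons hz' orbT.
Qed.

Lemma KL T s : is_linear_op T -> is_adjoint ip T T ->
  (exists K, forall x, normv ip (ev T (Lq s) x) <= K * normv ip x) ->
  (forall lam, in_spectrum ip T lam -> lam \in s) ->
  forall v, ev T (Lq s) v = 0.
Proof.
move=> Tl Ta [K hK] hs v; apply: contrapT => hv.
have qr := Lq_real s.
have Ba := ev_adj Ta qr; have Bl := ev_lin Tl (Lq s).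
have [M [M0 nb]] := lemC Hip Bl Ba hK (ex_intro _ v hv).
set q := Lq s in qr Ba Bl nb hK hv.
set P := q * q - ((M%:C)%C)%:P.
have qm : q \is monic by apply: monic_prod_XsubC.
have sq : (2 <= size q)%N by rewrite size_prod_XsubC.
have sqq : size (q * q) = (size q + size q).-1 by rewrite size_Mmonic ?monic_neq0.
have lP : lead_coef P = 1.
  rewrite /P lead_coefDl.
    by rewrite lead_coef_Mmonic //; apply/monicP.
  rewrite size_polyN sqq; apply: leq_ltn_trans (size_polyC_leq1 _) _.
  by lia.
have [rs hrs] := closed_field_poly_normal P.
rewrite lP scale1r in hrs.
have evP : forall x, ev T P x = ev T q (ev T q x) - (M%:C)%C *: x.
  by move=> x; rewrite /P evB // evM // evC.
have [z [zrs nbz]] : exists z, z \in rs /\ ~ BB (fun v => T v - z *: v).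
  apply: contrapT => h; apply: nb.
  apply: (BB_ext (S := ev T P)); first by move=> x; rewrite evP.
  rewrite hrs; apply: BB_prod => // z' hz'; apply: contrapT => nb'; apply: h.
  by exists z'.
have imz := real_of_notBB Hip Tl Ta nbz.
have zR : (complex.Re z)%:C%C = z by move: imz; case: (z) => a b /= ->.
have zs := hs z (notBB_spec Hip nbz).
have qz : q.[z] = 0.
  apply/eqP; rewrite -/(root q z) root_prod_XsubC /Lseq in_cons; apply/orP; right.
  by apply/mapP; exists z.
have Pz : P.[z] = 0 by rewrite hrs; apply/eqP; rewrite -/(root _ z) root_prod_XsubC.
move: Pz; rewrite /P hornerD hornerN hornerM hornerC qz mul0r sub0r => /eqP.
rewrite oppr_eq0 => /eqP hM0.
have : M = 0 by apply: complexI; rewrite hM0.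
by move=> e; rewrite e ltxx in M0.
Qed.

End KL.
Section Alg.
Variable R : realType.
Variable V : lmodType R[i].
Variable ip : V -> V -> R[i].
Hypothesis Hip : is_inner_product ip.
Variable A : (V -> V) -> Prop.
Hypothesis HA : is_Rstar_algebra ip A.
Local Notation N := (N ip).

Lemma A_bdd T : A T -> is_bounded_op ip T.
Proof. by case: HA => h _; apply: h. Qed.
Lemma A_lin T : A T -> is_linear_op T.
Proof. by move/A_bdd => []. Qed.
Lemma A0 : A (fun _ => 0).
Proof. by case: HA => _ [h _]. Qed.
Lemma AD T S : A T -> A S -> A (fun x => T x + S x).
Proof. by case: HA => _ [_ [h _]]; apply: h. Qed.
Lemma AZ a T : A T -> A (fun x => a *: T x).
Proof. by case: HA => _ [_ [_ [h _]]]; apply: h. Qed.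
Lemma AM T S : A T -> A S -> A (fun x => T (S x)).
Proof. by case: HA => _ [_ [_ [_ [h _]]]]; apply: h. Qed.
Lemma Aadj T : A T -> exists S, A S /\ is_adjoint ip T S.
Proof. by case: HA => _ [_ [_ [_ [_ [h _]]]]]; apply: h. Qed.
Lemma Aspec T : A T -> is_adjoint ip T T ->
  exists s : seq R[i], forall lam, in_spectrum ip T lam -> lam \in s.
Proof. by case: HA => _ [_ [_ [_ [_ [_ h]]]]]; apply: h. Qed.

Lemma A_ext T S : (forall x, T x = S x) -> A T -> A S.
Proof. by move=> h; rewrite (funext h). Qed.

Lemma AB T S : A T -> A S -> A (fun x => T x - S x).
Proof.
move=> hT hS; apply: (A_ext (T := fun x => T x + (-1) *: S x)).
  by move=> x; rewrite scaleN1r.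
by apply: AD => //; apply: AZ.
Qed.

Lemma A_sum n (F : nat -> V -> V) : (forall i, (i < n)%N -> A (F i)) ->
  A (fun v => \sum_(i < n) F i v).
Proof.
elim: n => [|n IH] h.
  by apply: (A_ext (T := fun _ => 0)) A0 => x; rewrite big_ord0.
apply: (A_ext (T := fun v => \sum_(i < n) F i v + F n v)).
  by move=> x; rewrite big_ord_recr.
apply: AD; last exact: h.
by apply: IH => i hi; apply: h; rewrite ltnS ltnW.
Qed.

Lemma A_iter T k : A T -> A (iter k.+1 T).
Proof.
move=> hT; elim: k => [|k IH]; first exact: (A_ext (T := T)).
exact: (A_ext (T := fun x => T (iter k.+1 T x))) (AM hT IH).
Qed.

Lemma A_ev0 T (p : {poly R[i]}) : A T -> p`_0 = 0 -> A (ev T p).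
Proof.
move=> hT h0; apply: (A_ext (T := fun v => \sum_(i < size p)
   (fun i v => p`_i *: iter i T v) i v)) => //.
apply: (A_sum (F := fun i v => p`_i *: iter i T v)) => -[|i] _ /=.
  by apply: (A_ext (T := fun _ => 0)) A0 => x; rewrite h0 scale0r.
exact: AZ (A_iter _ hT).
Qed.

Lemma A_evr T e (p : {poly R[i]}) : A T -> A e -> A (fun v => ev T p (e v)).
Proof.
move=> hT he; apply: (A_ext (T := fun v => \sum_(i < size p)
   (fun i v => p`_i *: iter i T (e v)) i v)) => //.
apply: (A_sum (F := fun i v => p`_i *: iter i T (e v))) => -[|i] _ /=.
  exact: AZ he.
exact: AZ (AM (A_iter _ hT) he).
Qed.

Lemma A_evl T e (p : {poly R[i]}) : A T -> A e -> A (fun v => e (ev T p v)).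
Proof.
move=> hT he; have el := A_lin he.
apply: (A_ext (T := fun v => \sum_(i < size p)
   (fun i v => p`_i *: e (iter i T v)) i v)).
  by move=> x; rewrite /ev (lin_sum el); apply: eq_bigr => i _; rewrite (linZ el).
apply: (A_sum (F := fun i v => p`_i *: e (iter i T v))) => -[|i] _ /=.
  exact: AZ he.
exact: AZ (AM he (A_iter _ hT)).
Qed.

Lemma KLA T : A T -> is_adjoint ip T T ->
  exists s, forall v, ev T (Lq s) v = 0.
Proof.
move=> hT hTa; have [s hs] := Aspec hT hTa; exists s.
apply: (KL Hip (A_lin hT) hTa) => //.
have [_ [K hK]] := A_bdd (A_ev0 hT (Lq_coef0 s)).
by exists K.
Qed.

Lemma fun_neq0 (f : V -> V) : f <> (fun _ => 0) -> exists v, f v <> 0.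
Proof.
move=> h; apply: contrapT => h'; apply: h; apply: funext => v.
by apply: contrapT => hv; apply: h'; exists v.
Qed.

Lemma scal_uniq (e : V -> V) (t1 t2 : R[i]) : e <> (fun _ => 0) ->
  (forall v, t1 *: e v = t2 *: e v) -> t1 = t2.
Proof.
move=> /fun_neq0 [v hv] h; have := h v; move/eqP; rewrite -subr_eq0 -scalerBl.
rewrite scaler_eq0 => /orP [/eqP|/eqP //]; first by move/eqP; rewrite subr_eq0 => /eqP.
Qed.

Lemma atom_scalar e y : is_atom ip A e -> A y -> is_adjoint ip y y ->
  (forall v, y (e v) = y v) -> (forall v, e (y v) = y v) ->
  exists a : R[i], forall v, y v = a *: e v.
Proof.
move=> [[eA eidem eadj] enz emin] yA yadj ye ey.
have yl := A_lin yA; have el := A_lin eA.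
have [s hs] := KLA yA yadj.
pose L := Lseq s.
pose Qk k := \prod_(a <- take k L) ('X - a%:P).
pose z k := fun v => ev y (Qk k) (e v).
have ecomm : forall P w, e (ev y P w) = ev y P (e w).
  have ei : forall i w, e (iter i y w) = iter i y (e w).
    move=> [|i] w //=; by rewrite ey -!iterS !iterSr ye.
  move=> P w; rewrite /ev (lin_sum el); apply: eq_bigr => i _.
  by rewrite (linZ el) ei.
have z0 : z 0%N = e by apply: funext => v; rewrite /z /Qk take0 big_nil ev1.
have zL : z (size L) = (fun _ => 0).
  by apply: funext => v; rewrite /z /Qk take_size; apply: hs.
have [k [zk zk1]] : exists k, z k <> (fun _ => 0) /\ z k.+1 = (fun _ => 0).
  apply: contrapT => h.
  have : forall k, z k <> (fun _ => 0).
    elim=> [|k IH]; first by rewrite z0.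
    move=> hk; apply: h; by exists k.
  by move/(_ (size L)).
have kL : (k < size L)%N.
  rewrite ltnNge; apply/negP => hk; apply: zk; rewrite -zk1.
  by rewrite /z /Qk !take_oversize // (leq_trans hk).
pose a := nth 0 L k.
have Qk1 : Qk k.+1 = ('X - a%:P) * Qk k.
  by rewrite /Qk (take_nth 0 kL) big_rcons mulrC.
have eig : forall v, y (z k v) = a *: z k v.
  move=> v; apply/eqP; rewrite -subr_eq0; apply/eqP.
  have := congr1 (fun f => f v) zk1; rewrite /z Qk1 /= evM // evB // evX // evC //.
have Qr : rpoly (Qk k).
  apply: rpoly_prod => b hb; apply: (Lseq_real (s := s)); exact: mem_take hb.
have ar : a^* = a by apply: (Lseq_real (s := s)); exact: mem_nth.
pose c := (Qk k).[a].
have cr : c^* = c by apply: rpoly_horner.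
have ez : forall v, e (z k v) = z k v by move=> v; rewrite /z ecomm eidem.
have zz : forall v, z k (z k v) = c *: z k v.
  by move=> v; rewrite {1}/z ez (ev_eig yl _ (eig v)).
have zadj : is_adjoint ip (z k) (z k).
  move=> u w; rewrite /z (ev_adj Hip yadj Qr) eadj ecomm //.
have zA : A (z k) by apply: A_evr.
have c0 : c != 0.
  apply/negP => /eqP c0; apply: zk; apply: funext => v; apply: (N_eq0 Hip).
  by rewrite /N (zadj v) zz c0 scale0r (ip0r Hip).
pose f := fun v => c^-1 *: z k v.
have zl : is_linear_op (z k).
  by move=> b x w; rewrite /z (linD el) (linZ el) (ev_lin yl).
have hf : f = e.
  apply: emin.
  - split; first by apply: AZ.
    + by move=> v; rewrite /f (linZ zl) zz !scalerA divfK.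
    + move=> u w; rewrite /f (ipZl Hip) (ipZr Hip) zadj.
      suff -> : (c^-1)^* = c^-1 by [].
      by apply/eqP; rewrite -CrealE rpredV CrealE cr.
  - move=> hf0; apply: zk; apply: funext => v.
    have := congr1 (fun g => g v) hf0; rewrite /f /= => /eqP.
    by rewrite scaler_eq0 invr_eq0 (negbTE c0) /= => /eqP.
  - by move=> v; rewrite /f /z eidem.
exists a => v; rewrite -ye -hf /f (linZ yl) eig scalerA mulrC -scalerA //.
Qed.

End Alg.
Section Proj.
Variable R : realType.
Variable V : lmodType R[i].
Variable ip : V -> V -> R[i].
Hypothesis Hip : is_inner_product ip.
Variable A : (V -> V) -> Prop.
Hypothesis HA : is_Rstar_algebra ip A.
Local Notation N := (N ip).
Local Notation d := (fun _ : V => (0 : V)).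

Lemma adj_le2 (p q : V -> V) : is_adjoint ip p p -> is_adjoint ip q q ->
  (forall v, q (p v) = q v) -> forall v, p (q v) = q v.
Proof.
move=> hp hq h v; apply: (ip_inj Hip) => w.
by rewrite hp hq h -hq.
Qed.

Lemma proj_le_trans (p q r : V -> V) : proj_le p q -> proj_le q r -> proj_le p r.
Proof. by move=> h1 h2 v; rewrite -h1 h2 h1. Qed.

Lemma proj_sub p q : is_proj ip A p -> is_proj ip A q -> proj_le q p ->
  is_proj ip A (fun v => p v - q v).
Proof.
move=> [pA pid padj] [qA qid qadj] hqp.
have pl := A_lin HA pA; have ql := A_lin HA qA.
have hpq := adj_le2 padj qadj hqp.
split; first exact: (AB HA pA qA).
  by move=> v; rewrite (linB pl) (linB ql) pid hpq hqp qid subrr subr0.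
by move=> u w; rewrite (ipBl Hip) (ipBr Hip) padj qadj.
Qed.

Lemma sum_ge_term (F : nat -> R) n i : (forall j, 0 <= F j) -> (i < n)%N ->
  F i <= \sum_(j < n) F j.
Proof.
move=> h hi; rewrite (bigD1 (Ordinal hi)) //= lerDl.
by apply: sumr_ge0 => j _.
Qed.

Lemma orth r (l : seq (V -> V)) i : is_adjoint ip r r -> (forall v, r (r v) = r v) ->
  (forall j, (j < size l)%N -> is_proj ip A (nth d l j)) ->
  (forall v, r v = \sum_(j < size l) nth d l j v) -> (i < size l)%N ->
  proj_le (nth d l i) r.
Proof.
move=> radj rid hl hr hi.
have [eA eid eadj] := hl i hi.
suff re : forall v, r (nth d l i v) = nth d l i v.
  exact: (adj_le Hip radj eadj re).
move=> v; set x := nth d l i v.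
have hx : nth d l i x = x by rewrite /x eid.
apply/eqP; rewrite eq_sym -subr_eq0; apply/eqP; apply: (N_eq0 Hip).
apply/eqP; rewrite eq_le (N_ge0 Hip) andbT.
have e1 : ip (x - r x) (x - r x) = ip x x - ip (r x) x.
  have h2 : ip x (r x) = ip (r x) x by rewrite radj.
  have h1 : ip (r x) (r x) = ip (r x) x by rewrite [LHS]radj rid h2.
  rewrite (ipBl Hip) !(ipBr Hip) h1 h2; ring.
have e2 : ip (r x) x = (\sum_(j < size l) N (nth d l j x))%:C%C.
  rewrite hr (ip_suml Hip) rmorph_sum; apply: eq_bigr => j _.
  have [gA gid gadj] := hl j (ltn_ord j).
  by rewrite -{1}gid gadj (ipxx Hip).
have e3 : N (x - r x) = N x - \sum_(j < size l) N (nth d l j x).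
  by rewrite /N e1 e2 (ipxx Hip x) /=.
rewrite e3 subr_le0.
have := @sum_ge_term (fun j => N (nth d l j x)) (size l) i (fun j => N_ge0 Hip (nth d l j x)) hi.
by rewrite /= hx.
Qed.

Definition tco (e Y : V -> V) : R[i] :=
  match pselect (exists t : R[i], forall v, e (Y (e v)) = t *: e v) with
  | left h => projT1 (cid h)
  | right _ => 0
  end.

Lemma tcoP e Y : (exists t : R[i], forall v, e (Y (e v)) = t *: e v) ->
  forall v, e (Y (e v)) = tco e Y *: e v.
Proof.
rewrite /tco; case: pselect => // h _.
by case: (cid h).
Qed.

Lemma tco_ex e Y : is_atom ip A e -> A Y -> is_adjoint ip Y Y ->
  exists t : R[i], forall v, e (Y (e v)) = t *: e v.
Proof.
move=> he YA Yadj; have [[eA eid eadj] _ _] := he.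
apply: (atom_scalar Hip HA (y := fun v => e (Y (e v))) he).
- exact: (AM HA eA (AM HA YA eA)).
- by move=> u w; rewrite eadj Yadj eadj.
- by move=> v; rewrite eid.
- by move=> v; rewrite eid.
Qed.

Lemma tco_add e Y1 Y2 : is_atom ip A e -> A Y1 -> A Y2 ->
  is_adjoint ip Y1 Y1 -> is_adjoint ip Y2 Y2 ->
  tco e (fun v => Y1 v + Y2 v) = tco e Y1 + tco e Y2.
Proof.
move=> he h1 h2 a1 a2; have [[eA _ _] enz _] := he.
have el := A_lin HA eA.
have a12 : is_adjoint ip (fun v => Y1 v + Y2 v) (fun v => Y1 v + Y2 v).
  by move=> u w; rewrite (ipDl Hip) (ipDr Hip) a1 a2.
have t12 := tcoP (tco_ex he (AD HA h1 h2) a12).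
have t1 := tcoP (tco_ex he h1 a1); have t2 := tcoP (tco_ex he h2 a2).
apply: (scal_uniq enz) => v.
by rewrite -t12 (linD el) t1 t2 scalerDl.
Qed.

Lemma tco_zero e : is_atom ip A e -> tco e (fun _ => 0) = 0.
Proof.
move=> he; have [[eA _ _] enz _] := he; have el := A_lin HA eA.
have ex : exists t : R[i], forall v, e ((fun _ => 0) (e v)) = t *: e v.
  by exists 0 => v; rewrite (lin0 el) scale0r.
apply: (scal_uniq enz) => v.
by rewrite -(tcoP ex) (lin0 el) scale0r.
Qed.

Lemma tco_sym e f : is_atom ip A e -> is_atom ip A f -> tco e f = tco f e.
Proof.
move=> he hf.
have [[eA eid eadj] enz _] := he; have [[fA fid fadj] fnz _] := hf.
have el := A_lin HA eA; have fl := A_lin HA fA.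
have ht := tcoP (tco_ex he fA fadj); have ht' := tcoP (tco_ex hf eA eadj).
set t := tco e f in ht *; set t' := tco f e in ht' *.
have h1 : t * t = t' * t.
  apply: (scal_uniq enz) => v.
  have E1 : e (f (e (f (e v)))) = (t * t) *: e v by rewrite ht ht scalerA.
  have E2 : e (f (e (f (e v)))) = (t' * t) *: e v.
    by rewrite ht' (linZ el) ht scalerA.
  by rewrite -E1 E2.
have h2 : t' * t' = t * t'.
  apply: (scal_uniq fnz) => v.
  have E1 : f (e (f (e (f v)))) = (t' * t') *: f v by rewrite ht' ht' scalerA.
  have E2 : f (e (f (e (f v)))) = (t * t') *: f v.
    by rewrite ht (linZ fl) ht' scalerA.
  by rewrite -E1 E2.
have : (t - t') * (t - t') = 0.
  rewrite (_ : (t - t') * (t - t') = (t * t - t' * t) - (t * t' - t' * t')).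
    by rewrite h1 h2 !subrr.
  ring.
by move/eqP; rewrite mulf_eq0 orbb subr_eq0 => /eqP.
Qed.

End Proj.
Section Trace.
Variable R : realType.
Variable V : lmodType R[i].
Variable ip : V -> V -> R[i].
Hypothesis Hip : is_inner_product ip.
Variable A : (V -> V) -> Prop.
Hypothesis HA : is_Rstar_algebra ip A.
Local Notation d := (fun _ : V => (0 : V)).
Variable s1 : seq (V -> V).
Hypothesis hs1 : forall j, (j < size s1)%N -> is_atom ip A (nth d s1 j).
Variable p0 : V -> V.
Hypothesis hp0 : forall v, p0 v = \sum_(j < size s1) nth d s1 j v.

Definition tau Y := \sum_(j < size s1) tco (nth d s1 j) Y.

Lemma tau_add Y1 Y2 : A Y1 -> A Y2 -> is_adjoint ip Y1 Y1 -> is_adjoint ip Y2 Y2 ->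
  tau (fun v => Y1 v + Y2 v) = tau Y1 + tau Y2.
Proof.
move=> h1 h2 a1 a2; rewrite /tau -big_split; apply: eq_bigr => j _.
exact: (tco_add Hip HA (hs1 (ltn_ord j)) h1 h2 a1 a2).
Qed.

Lemma tau_zero : tau (fun _ => 0) = 0.
Proof. by rewrite /tau big1 // => j _; apply: (tco_zero HA (hs1 (ltn_ord j))). Qed.

Lemma tau_atom f : is_atom ip A f -> proj_le f p0 -> tau f = 1.
Proof.
move=> hf hle; have [[fA fid fadj] fnz _] := hf; have fl := A_lin HA fA.
have -> : tau f = \sum_(j < size s1) tco f (nth d s1 j).
  by apply: eq_bigr => j _; apply: (tco_sym Hip HA (hs1 (ltn_ord j)) hf).
apply: (scal_uniq fnz) => v; rewrite scale1r scaler_suml.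
rewrite -[RHS]fid -(hle (f v)) hp0 (lin_sum fl); apply: eq_bigr => j _.
have [[eA _ eadj] _ _] := hs1 (ltn_ord j).
by rewrite (tcoP (tco_ex Hip HA hf eA eadj)).
Qed.

Lemma sum_A_adj (l : seq (V -> V)) :
  (forall j, (j < size l)%N -> A (nth d l j) /\ is_adjoint ip (nth d l j) (nth d l j)) ->
  A (fun v => \sum_(g <- l) g v) /\
  is_adjoint ip (fun v => \sum_(g <- l) g v) (fun v => \sum_(g <- l) g v).
Proof.
elim: l => [|g l IH] h.
  split; first by apply: (A_ext (T := fun _ => 0)) (A0 HA) => x; rewrite big_nil.
  by move=> u w; rewrite !big_nil (ip0l Hip) (ip0r Hip).
have [gA gadj] := h 0%N erefl.
have [lA ladj] : A (fun v => \sum_(g <- l) g v) /\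
  is_adjoint ip (fun v => \sum_(g <- l) g v) (fun v => \sum_(g <- l) g v).
  by apply: IH => j hj; apply: (h j.+1).
split.
  apply: (A_ext (T := fun v => g v + \sum_(g <- l) g v)).
    by move=> x; rewrite big_cons.
  exact: (AD HA gA lA).
move=> u w; rewrite !big_cons (ipDl Hip) (ipDr Hip) gadj.
by have := ladj u w => /= ->.
Qed.

Lemma tau_list (l : seq (V -> V)) :
  (forall j, (j < size l)%N -> is_atom ip A (nth d l j) /\ proj_le (nth d l j) p0) ->
  tau (fun v => \sum_(g <- l) g v) = (size l)%:R.
Proof.
elim: l => [|g l IH] h.
  have -> : (fun v : V => \sum_(g <- ([::] : seq (V -> V))) g v) = (fun _ => 0 : V).
    by apply: funext => v; rewrite big_nil.
  exact: tau_zero.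
have [[[gA _ gadj] _ _] gle] := h 0%N erefl.
have hl : forall j, (j < size l)%N -> is_atom ip A (nth d l j) /\ proj_le (nth d l j) p0.
  by move=> j hj; apply: (h j.+1).
have [lA ladj] := sum_A_adj (l := l) (fun j hj =>
  let: conj (And3 (And3 a _ b) _ _) _ := hl j hj in conj a b).
have -> : (fun v : V => \sum_(g <- g :: l) g v) = (fun v => g v + \sum_(g <- l) g v).
  by apply: funext => v; rewrite big_cons.
rewrite tau_add // IH // (tau_atom (h 0%N erefl).1 gle) /=.
by rewrite -[in RHS]addn1 natrD addrC.
Qed.

Lemma tau_count r : purely_atomic ip A -> is_proj ip A r -> proj_le r p0 ->
  exists k : nat, tau r = k%:R /\ (r <> (fun _ => 0) -> (0 < k)%N).
Proof.
move=> PA hr hle; have [s [hs er]] := PA r hr.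
have [rA rid radj] := hr.
exists (size s); split; last first.
  move=> rnz; rewrite lt0n; apply/negP => /eqP /size0nil s0.
  by apply: rnz; rewrite er s0; apply: funext => v; rewrite big_nil.
have hrv : forall v, r v = \sum_(j < size s) nth d s j v.
  by move=> v; rewrite er /= (big_nth d) big_mkord.
rewrite er; apply: tau_list => j hj; split; first exact: hs.
apply: proj_le_trans hle.
exact: (orth Hip radj rid (fun j hj => let: And3 a _ _ := hs j hj in a) hrv hj).
Qed.

Lemma chain_false (p : nat -> V -> V) : purely_atomic ip A -> p 0%N = p0 ->
  (forall n, is_proj ip A (p n) /\ proj_lt (p n.+1) (p n)) -> False.
Proof.
move=> PA e0 hp.
have ple : forall n, proj_le (p n) p0.
  elim=> [|n IH]; first by have [[_ pid _] _] := hp 0%N; rewrite e0 in pid *; move=> v; rewrite pid.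
  by apply: proj_le_trans IH; have [_ [hlt _]] := hp n.
have step : forall n k, tau (p n) = k%:R ->
    exists k', tau (p n.+1) = k'%:R /\ (k' < k)%N.
  move=> n k tk.
  have [hpn [hle hne]] := hp n; have [hpn1 _] := hp n.+1.
  have [pA pid padj] := hpn; have [qA qid qadj] := hpn1.
  have pl := A_lin HA pA; have ql := A_lin HA qA.
  set dn := fun v => p n v - p n.+1 v.
  have hdn : is_proj ip A dn by apply: proj_sub.
  have dle : proj_le dn p0.
    by move=> v; rewrite /dn (ple n) (ple n.+1).
  have dnz : dn <> (fun _ => 0).
    move=> h; apply: hne; apply: funext => v.
    have := congr1 (fun g => g v) h; rewrite /dn /= => /eqP; rewrite subr_eq0 => /eqP.
    by move=> ->.
  have [k1 [t1 _]] := tau_count PA hpn1 (ple n.+1).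
  have [k2 [t2 k2pos]] := tau_count PA hdn dle.
  exists k1; split => //.
  have e : p n = (fun v => p n.+1 v + dn v).
    by apply: funext => v; rewrite /dn subrKC.
  have [dA _ dadj] := hdn.
  move: tk; rewrite e tau_add // t1 t2 -natrD => /eqP; rewrite eqr_nat => /eqP <-.
  by rewrite -[X in (X < _)%N]addn0 ltn_add2l; apply: k2pos.
have [k0 [t0 _]] := tau_count PA (hp 0%N).1 (ple 0%N).
have : forall n, exists k, tau (p n) = k%:R /\ (k + n <= k0)%N.
  elim=> [|n [k [tk hk]]]; first by exists k0; rewrite addn0.
  have [k' [tk' hk']] := step n k tk.
  by exists k'; split => //; rewrite addnS; apply: leq_trans hk; rewrite ltn_add2r.
move=> /(_ k0.+1) [k [_ hk]].
by move: hk; rewrite addnS ltnNge leq_addl.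
Qed.

End Trace.
Section Main.
Variable R : realType.
Variable V : lmodType R[i].
Variable ip : V -> V -> R[i].
Hypothesis Hip : is_inner_product ip.
Variable A : (V -> V) -> Prop.
Hypothesis HA : is_Rstar_algebra ip A.
Local Notation d := (fun _ : V => (0 : V)).
Local Notation N := (N ip).

Definition pchain := exists p : nat -> (V -> V),
  forall n : nat, is_proj ip A (p n) /\ proj_lt (p n.+1) (p n).

Lemma chain_of (X : (V -> V) -> Prop) r0 : (forall r, X r -> is_proj ip A r) ->
  (forall r, X r -> exists q, X q /\ proj_lt q r) -> X r0 -> pchain.
Proof.
move=> hX hstep hr0.
have hc : forall r, exists q, X r -> X q /\ proj_lt q r.
  move=> r; case: (pselect (X r)) => [xr|nxr].
    by have [q hq] := hstep r xr; exists q.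
  by exists r.
have [g hg] := choice hc.
pose p := fun n => iter n g r0.
have Xp : forall n, X (p n).
  by elim=> [|n IH] //=; have [] := hg _ IH.
exists p => n; split; first exact: hX.
by have [] := hg _ (Xp n).
Qed.

Lemma atom_below r : ~ pchain -> is_proj ip A r -> r <> (fun _ => 0) ->
  exists e, is_atom ip A e /\ proj_le e r.
Proof.
move=> nc hr rnz; apply: contrapT => h.
pose X := fun q => [/\ is_proj ip A q, q <> (fun _ => 0) & proj_le q r].
apply: nc; apply: (chain_of (X := X) (r0 := r)).
- by move=> q [].
- move=> q [qp qnz qle].
  have natom : ~ is_atom ip A q by move=> ha; apply: h; exists q.
  have : ~ (forall q', is_proj ip A q' -> q' <> (fun _ => 0) -> proj_le q' q -> q' = q).
    by move=> hq; apply: natom; split.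
  move=> /existsNP [q' hq']; exists q'.
  have [h1 h2 h3 h4] : [/\ is_proj ip A q', q' <> (fun _ => 0),
      proj_le q' q & q' <> q].
    apply: contrapT => hn; apply: hq' => a b c; apply: contrapT => e.
    exact: (hn (And4 a b c e)).
  split; last by split.
  by split => //; apply: proj_le_trans h3 qle.
- split => // v; have [_ rid _] := hr; exact: rid.
Qed.

Definition decomp (p : V -> V) := exists s : seq (V -> V),
  (forall i : nat, (i < size s)%N -> is_atom ip A (nth (fun _ => 0) s i)) /\
  p = (fun x => \sum_(q <- s) q x).

Lemma dcc_PA : ~ pchain -> purely_atomic ip A.
Proof.
move=> nc p hp; apply: contrapT => hnd.
pose X := fun q => is_proj ip A q /\ ~ decomp q.
apply: (nc); apply: (chain_of (X := X) (r0 := p)); [by move=> q [] | | by split].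
move=> q [hq nd].
have qnz : q <> (fun _ => 0).
  move=> q0; apply: nd; exists [::]; split => //.
  by rewrite q0; apply: funext => v; rewrite big_nil.
have [e [he hle]] := atom_below nc hq qnz.
have [[eA eid eadj] enz _] := he.
have [qA qid qadj] := hq.
have ql := A_lin HA qA.
exists (fun v => q v - e v); split; first split.
- exact: proj_sub.
- move=> [s [hs es]]; apply: nd; exists (e :: s); split.
    by move=> [|i] //= hi; apply: hs.
  apply: funext => v; rewrite big_cons -(congr1 (fun f => f v) es) /=.
  by rewrite addrC subrK.
split.
  by move=> v; rewrite /= qid (hle v).
move=> hqe; apply: enz; apply: funext => v.
have := congr1 (fun f => f v) hqe => /= /eqP.
by rewrite -subr_eq0 addrAC subrr add0r oppr_eq0 => /eqP.
Qed.

Definition ichain := exists a : nat -> (V -> V),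
  forall n : nat, A (a n) /\
    (forall T, principal_right_ideal A (a n.+1) T -> principal_right_ideal A (a n) T) /\
    ~ (forall T, principal_right_ideal A (a n) T -> principal_right_ideal A (a n.+1) T).

Lemma proj_in_ideal p : is_proj ip A p -> principal_right_ideal A p p.
Proof.
move=> [pA _ _]; exists (fun _ => 0), 1; split; first exact: A0 HA.
by apply: funext => v; rewrite (lin0 (A_lin HA pA)) scale1r add0r.
Qed.

Lemma pchain_ichain : pchain -> ichain.
Proof.
move=> [p hp]; exists p => n.
have [[pA pid padj] [hle hne]] := hp n; have [[qA qid qadj] _] := hp n.+1.
have pl := A_lin HA pA; have ql := A_lin HA qA.
have hpq := adj_le2 Hip padj qadj hle.
split => //; split.
  move=> T [x [lam [xA ->]]].
  exists (fun v => p n.+1 (x v) + lam *: p n.+1 v), 0; split.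
    exact: (AD HA (AM HA qA xA) (AZ HA lam qA)).
  by apply: funext => v; rewrite scale0r addr0 (linD pl) (linZ pl) !hpq.
move=> h; have [x [lam [xA hx]]] := h (p n) (proj_in_ideal (hp n).1).
apply: hne; apply: funext => v.
have e1 := hle v.
have e3 : p n v = p n.+1 (x v) + lam *: p n.+1 v := congr1 (fun f => f v) hx.
have e2 : p n.+1 (p n v) = p n v by rewrite e3 (linD ql) (linZ ql) !qid.
by rewrite -e1 e2.
Qed.

Lemma range_proj a : A a -> exists p, is_proj ip A p /\
  (forall T, principal_right_ideal A a T <-> principal_right_ideal A p T).
Proof.
move=> aA; have [a' [a'A hadj]] := Aadj HA aA.
have al := A_lin HA aA; have a'l := A_lin HA a'A.
have a'adj : forall x y, ip (a' x) y = ip x (a y).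
  by move=> x y; rewrite (ipC Hip) -hadj -(ipC Hip).
pose b := fun v => a (a' v).
have bA : A b := AM HA aA a'A.
have bl : is_linear_op b := A_lin HA bA.
have badj : is_adjoint ip b b by move=> x y; rewrite /b hadj a'adj.
have [s hs] := KLA Hip HA bA badj.
pose L := Lseq s.
pose r := \prod_(c <- L | c != 0) ('X - c%:P).
have [m hm] : exists m, Lq s = 'X ^+ m * r.
  rewrite /Lq (bigID (fun c => c == 0)) /=.
  rewrite (eq_bigr (fun _ => 'X ^+ 1)); last by move=> c /eqP ->; rewrite subr0 expr1.
  by rewrite prodrXr; eexists.
have red : forall k, (forall v, ev b ('X ^+ k.+1 * r) v = 0) ->
    forall v, ev b ('X * r) v = 0.
  elim=> [|k IH] hk; first by move=> v; have := hk v; rewrite expr1.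
  apply: IH => v; apply: (N_eq0 Hip).
  have e1 : ev b ('X ^+ k.+1 * r) v = b (ev b ('X ^+ k * r) v).
    by rewrite exprS -mulrA evXM.
  have e2 : b (b (ev b ('X ^+ k * r) v)) = 0.
    by have := hk v; rewrite exprS -mulrA evXM // exprS -mulrA evXM.
  by rewrite e1 /N badj e2 (ip0r Hip).
have Xr0 : forall v, ev b ('X * r) v = 0.
  apply: (red m) => v; rewrite exprS -mulrA evXM // -hm hs.
  exact: lin0.
pose rho := r.[0].
have rho0 : rho != 0.
  rewrite /rho /r horner_prod prodf_seq_neq0; apply/allP => c _.
  by apply/implyP => hc; rewrite hornerXsubC sub0r oppr_eq0.
have rr : rpoly r.
  rewrite /r -big_filter; apply: rpoly_prod => c.
  rewrite mem_filter => /andP [_ hc]; exact: (Lseq_real hc).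
have rhor : rho^* = rho by apply: rpoly_horner => //; rewrite conjC0.
pose h := 1 - (rho^-1)%:P * r.
have h0 : h`_0 = 0.
  by rewrite /h coefB coef1 coefCM -horner_coef0 -/rho mulVf // subrr.
pose g := drop_poly 1 h.
have hg : h = 'X * g.
  rewrite -{1}(poly_take_drop 1 h) expr1 mulrC -/g.
  suff -> : take_poly 1 h = 0 by rewrite add0r.
  apply/polyP => i; rewrite coef_take_poly coef0.
  by case: i => [|i] //=; rewrite h0.
have hr : rpoly h.
  have ri : (rho^-1)^* = rho^-1.
    by apply/eqP; rewrite -CrealE rpredV CrealE rhor.
  by rewrite /h /rpoly rmorphB rmorph1 rmorphM /= map_polyC /= rr ri.
pose p := ev b h.
have pA : A p := A_ev0 HA bA h0.
have padj : is_adjoint ip p p := ev_adj Hip badj hr.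
have pl : is_linear_op p := ev_lin bl h.
have hr0 : forall v, ev b (h * r) v = 0.
  move=> v; rewrite (_ : h * r = g * ('X * r)); last by rewrite hg; ring.
  by rewrite evM // Xr0 (lin0 (ev_lin bl g)).
have pid : forall v, p (p v) = p v.
  move=> v; have E : h * h = h - (rho^-1)%:P * (h * r) by rewrite /h; ring.
  by rewrite /p -evM // E evB // evM // hr0 evC scaler0 subr0.
have pb : forall v, p (b v) = b v.
  move=> v; have E : h * 'X = 'X - (rho^-1)%:P * ('X * r) by rewrite /h; ring.
  by rewrite -{1}(evX bl v) /p -evM // E evB // evM // Xr0 evC scaler0 subr0 evX.
have bp := adj_le Hip padj badj pb.
have a'p : forall u, a' (p u) = a' u.
  move=> u; apply/eqP; rewrite -subr_eq0; apply/eqP; rewrite -(linB a'l).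
  apply: (N_eq0 Hip); rewrite /N a'adj.
  have -> : a (a' (p u - u)) = 0 by rewrite -/(b _) (linB bl) bp subrr.
  by rewrite (ip0r Hip).
have pa : forall v, p (a v) = a v.
  move=> v; apply: (ip_inj Hip) => w.
  by rewrite padj hadj a'p -hadj.
pose x0 := fun v => a' (ev b g v).
have x0A : A x0 := @A_evl _ _ _ _ HA b a' g bA a'A.
have px0 : forall v, p v = a (x0 v) by move=> v; rewrite /p hg evXM.
exists p; split; first by split.
move=> T; split.
- move=> [x [lam [xA ->]]]; exists (fun v => a (x v) + lam *: a v), 0; split.
    exact: (AD HA (AM HA aA xA) (AZ HA lam aA)).
  by apply: funext => v; rewrite scale0r addr0 (linD pl) (linZ pl) !pa.
- move=> [y [mu [yA ->]]]; exists (fun v => x0 (y v) + mu *: x0 v), 0; split.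
    exact: (AD HA (AM HA x0A yA) (AZ HA mu x0A)).
  by apply: funext => v; rewrite scale0r addr0 (linD al) (linZ al) !px0.
Qed.

Lemma ichain_pchain : ichain -> pchain.
Proof.
move=> [a ha].
have hc : forall n, exists p, is_proj ip A p /\
    (forall T, principal_right_ideal A (a n) T <-> principal_right_ideal A p T).
  by move=> n; apply: range_proj; have [] := ha n.
have [g hg] := choice hc.
exists g => n.
have [gp1 gi1] := hg n.+1; have [gp gi] := hg n.
have [_ [inc ninc]] := ha n.
split => //.
have hin : principal_right_ideal A (g n) (g n.+1).
  by apply/gi/inc/gi1; apply: proj_in_ideal.
have [y [mu [yA hy]]] := hin.
have [gA gid gadj] := gp; have [g1A g1id g1adj] := gp1.
have gl := A_lin HA gA.
have e : forall v, g n (g n.+1 v) = g n.+1 v.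
  by move=> v; rewrite hy /= (linD gl) (linZ gl) !gid.
split; first exact: (adj_le Hip gadj g1adj e).
move=> heq; apply: ninc => T hT.
by apply/gi1; rewrite heq; apply/gi.
Qed.

End Main.

Theorem proposition5p8 (R : realType) (V : lmodType R[i])
    (ip : V -> V -> R[i]) (A : (V -> V) -> Prop) :
  is_hilbert ip -> is_Rstar_algebra ip A ->
  (purely_atomic ip A <->
     ~ exists p : nat -> (V -> V),
         forall n : nat, is_proj ip A (p n) /\ proj_lt (p n.+1) (p n)) /\
  ((~ exists p : nat -> (V -> V),
         forall n : nat, is_proj ip A (p n) /\ proj_lt (p n.+1) (p n)) <->
   ~ exists a : nat -> (V -> V),
       forall n : nat, A (a n) /\
         (forall T, principal_right_ideal A (a n.+1) T ->
                    principal_right_ideal A (a n) T) /\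
         ~ (forall T, principal_right_ideal A (a n) T ->
                      principal_right_ideal A (a n.+1) T)).
Proof.
move=> [Hip _] HA; split; split.
- move=> PA [p hp].
  have [s1 [hs1 e1]] := PA (p 0%N) (hp 0%N).1.
  have hp0 : forall v, p 0%N v = \sum_(j < size s1) nth (fun _ => 0) s1 j v.
    by move=> v; rewrite e1 (big_nth (fun _ => 0)) big_mkord.
  exact: (chain_false Hip HA hs1 hp0 PA erefl hp).
- move=> nc; exact: (dcc_PA Hip HA nc).
- by move=> nc ic; apply: nc; apply: (ichain_pchain Hip HA ic).
- by move=> nic pc; apply: nic; apply: (pchain_ichain Hip HA pc).
Qed.
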